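(* Let $k\ge1$ and $R\neq0$. Consider an indecomposable linear differential system $$y'=\Big(\frac{A_0+A_1x+\dots+A_kx^k}{x^{k+1}}+\frac{\widehat A_R}{x-R}\Big)y=\frac{B(x)}{x^{k+1}(x-R)}y,\qquad y\in\mathbb{C}^n,$$ where $A_0$ is diagonal with distinct eigenvalues. Then there exist $n-1$ distinct pairs $(i_\ell,j_\ell)$ with $i_\ell\neq j_\ell$, $\ell=1,\dots,n-1$, and exponents $m_{i_\ell,j_\ell}\in\{1,\dots,k+1\}$, with the following property. The equation is conjugate, by means of an invertible diagonal transformation, to a unique system in which the coefficient of the monomial $x^{m_{i_\ell,j_\ell}}$ of the entry $(B)_{i_\ell,j_\ell}$ equals $1$ for each $\ell$. The only automorphisms of this normalized unique system are the scalar matrices $cI_n$, $c\in\mathbb{C}^*$.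
   Context: The system is indecomposable if it cannot be gauge transformed to a block diagonal form. An automorphism of the system is an invertible gauge transformation $y=gz$ transforming the system into itself. *)

(* Defs.v *)
From HB Require Import structures.
From mathcomp Require Import all_boot all_order all_algebra.
From mathcomp Require Import reals.
From mathcomp.real_closed Require Import complex.
Set Implicit Arguments. Unset Strict Implicit. Unset Printing Implicit Defensive.
Import Order.TTheory GRing.Theory Num.Theory.
Local Open Scope ring_scope.

(* A system  y' = ( (A_0 + A_1 x + ... + A_k x^k)/x^(k+1) + AR/(x - r0) ) y
   is encoded by its constant coefficient data: A : 'I_k.+1 -> 'M_n (A i = A_i)
   and AR : 'M_n.  The pole r0 and k are fixed parameters. *)
Definition system (C : Type) (n k : nat) : Type :=
  (('I_k.+1 -> 'M[C]_n) * 'M[C]_n)%type.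

Definition gauge (C : fieldType) (n k : nat) (g : 'M[C]_n) (S : system C n k)
  : system C n k :=
  (fun i => invmx g *m S.1 i *m g, invmx g *m S.2 *m g).

(* The polynomial matrix B(x) = (A_0 + ... + A_k x^k)(x - r0) + AR x^(k+1),
   so that the system reads y' = B(x) / (x^(k+1) (x - r0)) y. *)
Definition Bpoly (C : fieldType) (n k : nat) (r0 : C) (S : system C n k)
  : 'M[{poly C}]_n :=
  ('X - r0%:P) *: (\sum_(i < k.+1) 'X^i *: map_mx polyC (S.1 i))
  + 'X^(k.+1) *: map_mx polyC S.2.

Definition block_diag2 (C : fieldType) (n : nat) (p : nat) (M : 'M[C]_n) : Prop :=
  forall i j : 'I_n, (i < p)%N != (j < p)%N -> M i j = 0.

Definition is_block_diag_sys (C : fieldType) (n k : nat) (S : system C n k) : Prop :=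
  exists p : nat, [/\ (0 < p)%N, (p < n)%N,
    (forall i, block_diag2 p (S.1 i)) & block_diag2 p S.2].

Definition indecomposable (C : fieldType) (n k : nat) (S : system C n k) : Prop :=
  ~ exists g : 'M[C]_n, g \in unitmx /\ is_block_diag_sys (gauge g S).

Definition automorphism (C : fieldType) (n k : nat) (S : system C n k)
  (g : 'M[C]_n) : Prop :=
  g \in unitmx /\ gauge g S = S.

Definition invertible_diagonal (C : fieldType) (n : nat) (D : 'M[C]_n) : Prop :=
  is_diag_mx D /\ D \in unitmx.

(* Main.v *)
Require Import Defs.
From HB Require Import structures.
From mathcomp Require Import all_boot all_order all_algebra.
From mathcomp Require Import reals.
From mathcomp.real_closed Require Import complex.
Import Order.TTheory GRing.Theory Num.Theory.
Local Open Scope ring_scope.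

From mathcomp Require Import ring zify fingroup perm.
From Stdlib Require Import FunctionalExtensionality.
Set Implicit Arguments. Unset Strict Implicit. Unset Printing Implicit Defensive.
Lemma sum_diagl (C : fieldType) n (X : 'M[C]_n) (f : 'I_n -> C) i :
  is_diag_mx X -> \sum_a X i a * f a = X i i * f i.
Proof.
move=> /is_diag_mxP dX; rewrite (bigD1 i) //= big1 ?addr0 // => a ai.
by rewrite dX ?mul0r // eq_sym.
Qed.

Lemma sum_diagr (C : fieldType) n (X : 'M[C]_n) (f : 'I_n -> C) j :
  is_diag_mx X -> \sum_a f a * X a j = f j * X j j.
Proof.
move=> /is_diag_mxP dX; rewrite (bigD1 j) //= big1 ?addr0 // => a aj.
by rewrite dX ?mulr0.
Qed.

Lemma invdiag_entries (C : fieldType) n (D : 'M[C]_n) :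
  invertible_diagonal D ->
  (forall i, D i i != 0) /\ forall i j, invmx D i j = (D i i)^-1 *+ (i == j).
Proof.
move=> [dD uD].
have H i j : D i i * invmx D i j = (i == j)%:R.
  have := congr1 (fun M : 'M_n => M i j) (mulmxV uD).
  by rewrite !mxE (sum_diagl (fun a => invmx D a j)).
have nz i : D i i != 0.
  by apply/eqP => h; have := H i i; rewrite h mul0r eqxx => /esym/eqP; rewrite oner_eq0.
split=> // i j; case: eqP => [<-|/eqP ij].
  by rewrite mulr1n -[invmx D i i](mulKf (nz i)) H eqxx mulr1.
by have := H i j; rewrite (negbTE ij) mulr0n => /eqP; rewrite mulf_eq0 (negbTE (nz i)) /= => /eqP ->; rewrite mulr0n.
Qed.

Lemma gaugeE (C : fieldType) n (D M : 'M[C]_n) i j :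
  invertible_diagonal D -> (invmx D *m M *m D) i j = M i j * (D j j / D i i).
Proof.
move=> iD; have [nz E] := invdiag_entries iD; have [dD _] := iD.
rewrite mxE (sum_diagr (fun a => (invmx D *m M) i a)) // mxE.
have dE : is_diag_mx (invmx D) by apply/is_diag_mxP => a b ab; rewrite E; case: (a =P b) => [h|]; [by move: ab; rewrite h eqxx | by rewrite mulr0n].
rewrite (sum_diagl (fun a => M a j)) // E eqxx mulr1n.
by ring.
Qed.

Lemma BpolyE (C : fieldType) n k (r0 : C) (S : system C n k) a b :
  Bpoly r0 S a b = ('X - r0%:P) * \poly_(t < k.+1) (S.1 (inord t) a b)
     + 'X^(k.+1) * (S.2 a b)%:P.
Proof.
rewrite /Bpoly !mxE summxE poly_def; congr (_ * _ + _).
  apply: eq_bigr => t _; rewrite !mxE inord_val. by rewrite -mul_polyC mulrC.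

Qed.

Lemma Bpoly_gauge (C : fieldType) n k (r0 : C) (S : system C n k) (D : 'M[C]_n) a b :
  invertible_diagonal D ->
  Bpoly r0 (gauge D S) a b = Bpoly r0 S a b * (D b b / D a a)%:P.
Proof.
move=> iD; rewrite !BpolyE /= gaugeE // polyCM.
have -> : \poly_(t < k.+1) (invmx D *m S.1 (inord t) *m D) a b
   = \poly_(t < k.+1) (S.1 (inord t) a b) * (D b b / D a a)%:P.
  by apply/polyP => t; rewrite coefMC !coef_poly; case: ifP => _; rewrite ?gaugeE ?mul0r.
by rewrite -polyCM; ring.
Qed.

Lemma Bpoly_gauge_coef (C : fieldType) n k (r0 : C) (S : system C n k) (D : 'M[C]_n) a b m :
  invertible_diagonal D ->
  (Bpoly r0 (gauge D S) a b)`_m = (Bpoly r0 S a b)`_m * (D b b / D a a).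
Proof. by move=> iD; rewrite Bpoly_gauge // coefMC. Qed.

Lemma Bpoly_coef0 (C : fieldType) n k (r0 : C) (S : system C n k) a b :
  is_diag_mx (S.1 ord0) -> a != b -> (Bpoly r0 S a b)`_0 = 0.
Proof.
move=> /is_diag_mxP dA ab; rewrite BpolyE coefD !coef0M coef_poly /=.
have -> : S.1 (inord 0) a b = 0 by rewrite (_ : inord 0 = ord0) ?dA //; apply/val_inj; rewrite /= inordK.
by rewrite coefXn mulr0 mul0r addr0.
Qed.

Lemma Bpoly_size (C : fieldType) n k (r0 : C) (S : system C n k) a b :
  (size (Bpoly r0 S a b) <= k.+2)%N.
Proof.
rewrite BpolyE; apply: (leq_trans (size_add _ _)); rewrite geq_max; apply/andP; split.
  apply: (leq_trans (size_mul_leq _ _)); rewrite size_XsubC.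
  by have := size_poly k.+1 (fun t => S.1 (inord t) a b); rewrite add2n.
apply: (leq_trans (size_mul_leq _ _)); rewrite size_polyXn.
by have := size_polyC_leq1 (S.2 a b); rewrite addSn; lia.
Qed.

Lemma Bpoly_nz_coef (C : fieldType) n k (r0 : C) (S : system C n k) a b :
  is_diag_mx (S.1 ord0) -> a != b -> Bpoly r0 S a b != 0 ->
  exists m, (1 <= m <= k.+1)%N /\ (Bpoly r0 S a b)`_m != 0.
Proof.
move=> dA ab nz; set p := Bpoly r0 S a b.
exists (size p).-1; have lc : p`_(size p).-1 != 0 by rewrite -lead_coefE lead_coef_eq0.
split=> //; have := Bpoly_size r0 S a b; rewrite -/p => sz.
have s0 : size p != 0%N by rewrite size_poly_eq0.
have s1 : size p != 1%N.
  by apply/eqP => e; move: lc; rewrite e Bpoly_coef0 ?eqxx.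
lia.
Qed.

Lemma Bpoly_eq0 (C : fieldType) n k (r0 : C) (S : system C n k) a b :
  r0 != 0 -> Bpoly r0 S a b = 0 -> (forall t, S.1 t a b = 0) /\ S.2 a b = 0.
Proof.
move=> r0nz; rewrite BpolyE => h.
have h2 : S.2 a b = 0.
  have := congr1 (fun p => p.[r0]) h; rewrite !hornerE subrr mul0r add0r.
  by move/eqP; rewrite mulf_eq0 expf_eq0 (negbTE r0nz) andbF /= => /eqP.
split=> //; move: h; rewrite h2 mulr0 addr0 => /eqP; rewrite mulf_eq0 polyXsubC_eq0 /= => /eqP hq.
move=> t; have := congr1 (fun p : {poly C} => p`_t) hq; rewrite coef_poly ltn_ord inord_val coef0 //.
Qed.

Fixpoint reach n (e : rel 'I_n) (r : 'I_n) (t : nat) : {set 'I_n} :=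
  if t is t'.+1 then reach e r t' :|: [set j | [exists i in reach e r t', e i j]]
  else [set r].

Lemma reach_path n (e : rel 'I_n) r p : forall x t,
  x \in reach e r t -> path e x p -> last x p \in reach e r (t + size p).
Proof.
elim: p => [|y p IH] x t /=; first by rewrite addn0.
move=> xin /andP[exy py]; rewrite addnS -addSn; apply: IH py.
by rewrite /= inE; apply/orP; right; rewrite inE; apply/existsP; exists x; rewrite xin.
Qed.

Lemma reach_connect n (e : rel 'I_n) r j : connect e r j -> exists t, j \in reach e r t.
Proof.
move/connectP => [p pp ->]; exists (0 + size p)%N; apply: reach_path pp.
by rewrite /= inE.
Qed.

Definition depth n (e : rel 'I_n) r (hc : forall j, exists t, j \in reach e r t) j :=
  ex_minn (hc j).

Definition par n (e : rel 'I_n) r (hc : forall j, exists t, j \in reach e r t) j :=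
  odflt r [pick i | e i j && (depth hc i < depth hc j)%N].

Lemma depth_r n (e : rel 'I_n) r hc : depth (e:=e) (r:=r) hc r = 0%N.
Proof.
rewrite /depth; case: ex_minnP => t _ /(_ 0%N); rewrite /= inE eqxx => /(_ isT).
by rewrite leqn0 => /eqP.
Qed.

Lemma par_spec n (e : rel 'I_n) r hc j : j != r ->
  e (par hc j) j && (depth (e:=e) (r:=r) hc (par hc j) < depth hc j)%N.
Proof.
move=> jr; rewrite /par; case: pickP => [i //|none]; exfalso.
have : exists i, e i j && (depth hc i < depth hc j)%N.
  move: (erefl (depth hc j)); rewrite {2}/depth; case: ex_minnP => t jin tmin dj.
  case: t jin tmin dj => [|t] /=.
    by rewrite inE => /eqP ejr; move: jr; rewrite ejr eqxx.
  rewrite inE => /orP[jin|]; first by move=> /(_ _ jin); rewrite ltnn.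
  rewrite inE => /existsP[i /andP[iin eij]] tmin dj; exists i; rewrite eij /= dj ltnS.
  by rewrite /depth; case: ex_minnP => s _ /(_ _ iin).
by move=> [i0]; rewrite none.
Qed.

Lemma tree_ind n (e : rel 'I_n) r hc (Q : 'I_n -> Prop) :
  Q r -> (forall j, j != r -> Q (par (e:=e) (r:=r) hc j) -> Q j) -> forall j, Q j.
Proof.
move=> Qr IH j; move: {2}(depth hc j) (leqnn (depth hc j)) => t; elim: t j => [|t IHt] j dj.
  case: (eqVneq j r) => [->//|jr]; have := par_spec hc jr; move: dj; rewrite leqn0 => /eqP ->.
  by rewrite ltn0 andbF.
case: (eqVneq j r) => [->//|jr]; apply: IH => //; apply: IHt.
by have /andP[_ lt] := par_spec hc jr; rewrite -ltnS; apply: leq_trans dj.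
Qed.

Fixpoint dval n (e : rel 'I_n) r (hc : forall j, exists t, j \in reach e r t) (T : Type) (f : 'I_n -> T -> T) (x0 : T) (t : nat) (j : 'I_n) : T :=
  if t is t'.+1 then (if j == r then x0 else f j (dval hc f x0 t' (par (e:=e) (r:=r) hc j))) else x0.

Lemma tree_rec n (e : rel 'I_n) r hc (T : Type) (f : 'I_n -> T -> T) (x0 : T) :
  exists d : 'I_n -> T, d r = x0 /\ forall j, j != r -> d j = f j (d (par (e:=e) (r:=r) hc j)).
Proof.
have stab : forall j t, (depth hc j <= t)%N -> dval hc f x0 t j = dval hc f x0 (depth hc j) j.
  apply: (tree_ind (e:=e) (r:=r) (hc:=hc)).
    by move=> t _; rewrite depth_r; case: t => //= t; rewrite eqxx.
  move=> j jr IH t; have /andP[_ lt] := par_spec hc jr.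
  case Dj: (depth hc j) lt => [//|s] lt; case: t => [//|t] st /=; rewrite (negbTE jr).
  by rewrite IH ?(IH s) //; lia.
exists (fun j => dval hc f x0 (depth hc j) j); split; first by rewrite depth_r.
move=> j jr; have /andP[_ lt] := par_spec hc jr.
case Dj: (depth hc j) lt => [//|s] lt /=; rewrite (negbTE jr) stab //.
Qed.

Lemma block_of_set (C : fieldType) n k (S : system C n.+1 k) (X : {set 'I_n.+1}) :
  (0 < #|X|)%N -> (#|X| < n.+1)%N ->
  (forall a b, a \in X -> b \notin X ->
     [/\ forall t, S.1 t a b = 0, S.2 a b = 0, forall t, S.1 t b a = 0 & S.2 b a = 0]) ->
  exists g, g \in unitmx /\ is_block_diag_sys (gauge g S).
Proof.
move=> X0 Xn hX.
set L := enum X ++ enum (~: X).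
have sL : size L = n.+1 by rewrite size_cat -!cardE cardsC card_ord.
have uL : uniq L.
  rewrite cat_uniq !enum_uniq /= andbT; apply/hasPn => x; rewrite !mem_enum in_setC.
  by [].
pose f (i : 'I_n.+1) := nth ord0 L i.
have finj : injective f.
  move=> i j /eqP; rewrite /f nth_uniq ?sL // => /eqP; exact: val_inj.
pose s := perm finj.
have fX (i : 'I_n.+1) : (f i \in X) = (i < #|X|)%N.
  rewrite /f nth_cat -cardE; case: ifP => lt.
    by rewrite (_ : nth _ _ _ \in X) //; rewrite -mem_enum mem_nth // -cardE.
  apply/negbTE; rewrite -in_setC -mem_enum mem_nth //.
  have := ltn_ord i; rewrite -cardE; have := cardsC X; rewrite card_ord; move/negbT: lt; rewrite -leqNgt => h1 h2 h3; by rewrite ltn_subLR // h2.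
pose g : 'M[C]_n.+1 := perm_mx s^-1.
have ug : g \in unitmx by exact: unitmx_perm.
have ig : invmx g = perm_mx s.
  have e1 : perm_mx s *m g = 1%:M by rewrite -perm_mxM mulgV perm_mx1.
  by rewrite -[perm_mx s]mulmx1 -(mulmxV ug) mulmxA e1 mul1mx.
have gE (M : 'M[C]_n.+1) a b : (invmx g *m M *m g) a b = M (s a) (s b).
  by rewrite ig -row_permE -col_permE !mxE.
exists g; split => //; exists #|X|; split => //.
  move=> t i j ij; rewrite /= gE !permE.
  case: (boolP (f i \in X)) => fi; case: (boolP (f j \in X)) => fj.
  - by move: ij; rewrite -!fX fi fj.
  - by have [] := hX _ _ fi fj.
  - by have [] := hX _ _ fj fi.
  - by move: ij; rewrite -!fX (negbTE fi) (negbTE fj).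
move=> i j ij; rewrite /= gE !permE.
case: (boolP (f i \in X)) => fi; case: (boolP (f j \in X)) => fj.
- by move: ij; rewrite -!fX fi fj.
- by have [] := hX _ _ fi fj.
- by have [] := hX _ _ fj fi.
- by move: ij; rewrite -!fX (negbTE fi) (negbTE fj).
Qed.

Lemma scalar_invdiag (C : fieldType) n (c : C) : c != 0 -> invertible_diagonal (c%:M : 'M[C]_n).
Proof.
move=> cnz; split; first exact: scalar_mx_is_diag.
by rewrite unitmxE det_scalar unitfE expf_neq0.
Qed.

Lemma gauge_eq (C : fieldType) n k (S : system C n k) (D1 D2 : 'M[C]_n) :
  invertible_diagonal D1 -> invertible_diagonal D2 ->
  (forall a b, D1 b b / D1 a a = D2 b b / D2 a a) -> gauge D1 S = gauge D2 S.
Proof.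
move=> i1 i2 h; rewrite /gauge; congr (_, _); [apply: functional_extensionality => t|];
  by apply/matrixP => a b; rewrite !gaugeE // h.
Qed.

Lemma scalar_auto (C : fieldType) n k (S : system C n k) (c : C) :
  c != 0 -> automorphism S c%:M.
Proof.
move=> cnz; have iD := scalar_invdiag n cnz; split; first by case: iD.
case: S => S1 S2; rewrite /gauge /=; congr (_, _); [apply: functional_extensionality => t|];
  by apply/matrixP => a b; rewrite !gaugeE // !mxE !eqxx !mulr1n divff // mulr1.
Qed.

Lemma connect_indec (C : fieldType) n k (r0 : C) (S : system C n.+1 k) :
  r0 != 0 -> indecomposable S ->
  forall j, connect (fun a b => (Bpoly r0 S a b != 0) || (Bpoly r0 S b a != 0)) ord0 j.
Proof.
move=> r0nz ind j; set e := (fun a b => _); apply/idPn => nc; apply: ind.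
pose X := [set x | connect e ord0 x].
have X0 : (0 < #|X|)%N by apply/card_gt0P; exists ord0; rewrite inE connect0.
have XC : (0 < #|~: X|)%N by apply/card_gt0P; exists j; rewrite !inE.
have Xn : (#|X| < n.+1)%N by have := cardsC X; rewrite card_ord; lia.
apply: (block_of_set X0 Xn) => a b aX bX.
have : ~~ e a b.
  apply/negP => eab; move: bX; rewrite inE => /negP; apply.
  by apply: connect_trans (connect1 eab); move: aX; rewrite inE.
rewrite /e negb_or !negbK => /andP[/eqP h1 /eqP h2].
have [h1a h1b] := Bpoly_eq0 r0nz h1; have [h2a h2b] := Bpoly_eq0 r0nz h2.
by split.
Qed.

Definition mch (C : fieldType) k (p : {poly C}) : nat :=
  if [pick m : 'I_k.+2 | (0 < m)%N && (p`_m != 0)] is Some m then val m else 0%N.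

Lemma mch_spec (C : fieldType) n k (r0 : C) (S : system C n k) a b :
  is_diag_mx (S.1 ord0) -> a != b -> Bpoly r0 S a b != 0 ->
  (1 <= mch k (Bpoly r0 S a b) <= k.+1)%N /\ (Bpoly r0 S a b)`_(mch k (Bpoly r0 S a b)) != 0.
Proof.
move=> dA ab nz; rewrite /mch; case: pickP => [m /andP[m0 cm]|none].
  by split => //; rewrite m0 -ltnS ltn_ord.
have [m [/andP[m1 mk] cm]] := Bpoly_nz_coef (r0:=r0) dA ab nz.
have mk2 : (m < k.+2)%N by lia.
by have := none (Ordinal mk2); rewrite /= m1 cm.
Qed.

Lemma main_succ (C : fieldType) (n k : nat) (r0 : C)
    (A : 'I_k.+1 -> 'M[C]_n.+1) (AR : 'M[C]_n.+1) :
  r0 != 0 ->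
  is_diag_mx (A ord0) ->
  (forall i j : 'I_n.+1, i != j -> A ord0 i i != A ord0 j j) ->
  indecomposable ((A, AR) : system C n.+1 k) ->
  exists (ij : 'I_n -> 'I_n.+1 * 'I_n.+1) (m : 'I_n -> nat),
    [/\ injective ij,
        (forall l, (ij l).1 != (ij l).2),
        (forall l, (1 <= m l <= k.+1)%N),
        (exists D : 'M[C]_n.+1, invertible_diagonal D /\
           forall l, (Bpoly r0 (gauge D (A, AR)) (ij l).1 (ij l).2)`_(m l) = 1) &
        ((forall D1 D2 : 'M[C]_n.+1,
           invertible_diagonal D1 -> invertible_diagonal D2 ->
           (forall l, (Bpoly r0 (gauge D1 (A, AR)) (ij l).1 (ij l).2)`_(m l) = 1) ->
           (forall l, (Bpoly r0 (gauge D2 (A, AR)) (ij l).1 (ij l).2)`_(m l) = 1) ->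
           gauge D1 (A, AR) = gauge D2 (A, AR)) /\
        (forall D : 'M[C]_n.+1, invertible_diagonal D ->
           (forall l, (Bpoly r0 (gauge D (A, AR)) (ij l).1 (ij l).2)`_(m l) = 1) ->
           forall g : 'M[C]_n.+1,
             automorphism (gauge D (A, AR)) g <-> exists c : C, c != 0 /\ g = c%:M))].
Proof.
move=> r0nz dA0 dist ind.
set S : system C n.+1 k := (A, AR).
set B := Bpoly r0 S.
set e := (fun a b : 'I_n.+1 => (B a b != 0) || (B b a != 0)).
have hconn := connect_indec r0nz ind.
have hc : forall j, exists t, j \in reach e ord0 t by move=> j; apply: reach_connect; exact: hconn.
set pr := par hc; set dp := depth hc.
have prS j : j != ord0 -> e (pr j) j && (dp (pr j) < dp j)%N by exact: par_spec.
have prne j : j != ord0 -> pr j != j.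
  by move=> /prS /andP[_ lt]; apply/eqP => h; move: lt; rewrite h ltnn.
pose edge j := if B (pr j) j != 0 then (pr j, j) else (j, pr j).
have edgeS j : j != ord0 -> [/\ (edge j).1 != (edge j).2, B (edge j).1 (edge j).2 != 0 &
    ((edge j).1 == pr j) && ((edge j).2 == j) || ((edge j).1 == j) && ((edge j).2 == pr j)].
  move=> jr; have /andP[ej _] := prS _ jr; have pj := prne _ jr; rewrite /edge.
  case: ifP => /= [-> |/negbT h]; first by rewrite pj !eqxx.
  have ej' : B j (pr j) != 0 by move: ej h; rewrite /e; case: (B (pr j) j != 0).
  by rewrite ej' !eqxx orbT eq_sym pj.
pose mm j := mch k (B (edge j).1 (edge j).2).
have mmS j : j != ord0 -> (1 <= mm j <= k.+1)%N /\ (B (edge j).1 (edge j).2)`_(mm j) != 0.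
  by move=> jr; have [h1 h2 _] := edgeS j jr; apply: mch_spec.
pose v (l : 'I_n) : 'I_n.+1 := lift ord0 l.
have vr l : v l != ord0 by rewrite eq_sym neq_lift.
have vsurj j : j != ord0 -> exists l, j = v l.
  by case: (unliftP ord0 j) => [l ->|->]; [exists l|rewrite eqxx].
have edge_const (r' : 'I_n.+1 -> C) :
    (forall l, r' (edge (v l)).1 = r' (edge (v l)).2) -> forall j, r' j = r' ord0.
  move=> h; apply: (tree_ind (e:=e) (r:=ord0) (hc:=hc)) => // j jr IH.
  have [l jl] := vsurj j jr; have [_ _ /orP[] /andP[/eqP h1 /eqP h2]] := edgeS j jr;
    have := h l; rewrite -jl h1 h2.
    by move=> <-; exact: IH.
  by move=> ->; exact: IH.
pose c j := (B (edge j).1 (edge j).2)`_(mm j).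
exists (fun l => edge (v l)), (fun l => mm (v l)); split.
- move=> l1 l2 h; apply: (@lift_inj _ ord0); rewrite -/(v l1) -/(v l2).
  move: h; rewrite /edge.
  have := prS _ (vr l1); have := prS _ (vr l2).
  move=> /andP[_ lt2] /andP[_ lt1].
  case: ifP => _; case: ifP => _ h; have /= h1 := congr1 fst h; have /= h2 := congr1 snd h => //.
  - by move: lt1 lt2; rewrite h1 -h2; lia.
  - by move: lt1 lt2; rewrite -h1 h2; lia.
- by move=> l; have [] := edgeS _ (vr l).
- by move=> l; have [] := mmS _ (vr l).
- pose f j x := if B (pr j) j != 0 then x / c j else c j * x.
  have [d [d0 dS]] := tree_rec hc f (1 : C).
  have dnz j : d j != 0.
    apply: (tree_ind (e:=e) (r:=ord0) (hc:=hc) (Q := fun j => d j != 0)) => [|j' jr IH].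
      by rewrite d0 oner_eq0.
    have [_ cnz] := mmS _ jr; rewrite dS // /f; case: ifP => _.
      by rewrite mulf_neq0 ?invr_eq0.
    by rewrite mulf_neq0.
  pose D : 'M[C]_n.+1 := diag_mx (\row_j d j).
  have DE j : D j j = d j by rewrite !mxE eqxx mulr1n.
  have iD : invertible_diagonal D.
    split; first exact: diag_mx_is_diag.
    rewrite unitmxE det_diag unitfE; apply/prodf_neq0 => j _; rewrite mxE; exact: dnz.
  exists D; split => // l; rewrite Bpoly_gauge_coef // !DE.
  have jr := vr l; set j := v l; have [_ cnz] := mmS _ jr.
  have dj := dS j jr; rewrite /f in dj.
  rewrite -/B -/(c j) -/(c j) in cnz *.
  move: cnz dj; set cj := c j; clearbody cj => cnz.
  have dnp := dnz (pr j); have dnj := dnz j.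
  rewrite /edge; case: ifP => _ /= -> //.
    by field; rewrite cnz dnp.
  by field; rewrite cnz dnp.
split.
  move=> D1 D2 i1 i2 h1 h2; have [nz1 _] := invdiag_entries i1; have [nz2 _] := invdiag_entries i2.
  have hr := edge_const (fun j => D2 j j / D1 j j).
  have hc' : forall j, D2 j j / D1 j j = D2 ord0 ord0 / D1 ord0 ord0.
    apply: hr => l; have := h1 l; have := h2 l; rewrite (Bpoly_gauge_coef _ _ _ _ _ i2) (Bpoly_gauge_coef _ _ _ _ _ i1).
    have [_ cnz] := mmS _ (vr l); move=> e2 e1; move: cnz.
    set a := (edge (v l)).1; set b := (edge (v l)).2; set cc := (Bpoly _ _ _ _)`_ _ => cnz.
    have : D1 b b / D1 a a = D2 b b / D2 a a.
      by apply: (mulfI cnz); rewrite e1 e2.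
    move=> hh; have n1 := nz1 a; have n2 := nz1 b; have n3 := nz2 a; have n4 := nz2 b.
    rewrite /= -/a -/b.
    have hz : D2 b b = D1 b b / D1 a a * D2 a a by rewrite hh divfK.
    rewrite hz; field; by rewrite n1 n2.
  apply: gauge_eq => // a b.
  have ha := hc' a; have hb := hc' b.
  set L := D2 ord0 ord0 / D1 ord0 ord0 in ha hb.
  have : D2 a a = L * D1 a a by rewrite -ha mulfVK.
  have : D2 b b = L * D1 b b by rewrite -hb mulfVK.
  move=> -> ->; have Lnz : L != 0 by rewrite -ha mulf_neq0 ?invr_eq0.
  by field; rewrite Lnz nz1.
move=> D iD hD g; split; last by move=> [cc [cnz ->]]; apply: scalar_auto.
move=> [ug hg]; have [nzD ED] := invdiag_entries iD.
set S' := gauge D S in hg *.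
set A' := S'.1 ord0.
have A'E a b : A' a b = A ord0 a b * (D b b / D a a) by rewrite /A' /S' /= gaugeE.
have dA' : is_diag_mx A'.
  by apply/is_diag_mxP => a b ab; rewrite A'E (is_diag_mxP dA0) ?mul0r.
have A'd a : A' a a = A ord0 a a by rewrite A'E divff ?mulr1.
have comm : A' *m g = g *m A'.
  have h : invmx g *m A' *m g = A' := congr1 (fun p => p.1 ord0) hg.
  by rewrite -{2}h !mulmxA mulmxV // mul1mx.
have dg : is_diag_mx g.
  apply/is_diag_mxP => a b ab.
  have := congr1 (fun M : 'M_n.+1 => M a b) comm; rewrite !mxE.
  rewrite (sum_diagl (fun x => g x b)) // (sum_diagr (fun x => g a x)) // !A'd.
  have abn : a != b by apply/negP => /eqP h; move: ab; rewrite h eqxx.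
  move/eqP; rewrite mulrC -subr_eq0 -mulrBr mulf_eq0 subr_eq0 eq_sym (negbTE (dist _ _ abn)) orbF.
  by move/eqP.
have ig : invertible_diagonal g by [].
have [nzg _] := invdiag_entries ig.
have hcg := edge_const (fun j => g j j).
have gc : forall j, g j j = g ord0 ord0.
  apply: hcg => l; have ee := Bpoly_gauge_coef r0 S' (edge (v l)).1 (edge (v l)).2 (mm (v l)) ig.
  rewrite hg in ee; have hDl := hD l; rewrite -/S' in hDl; rewrite hDl mul1r in ee.
  set a := (edge (v l)).1 in ee *; set b := (edge (v l)).2 in ee *.
  have na : (g a a)^-1 != 0 by rewrite invr_eq0.
  by apply: (mulIf na); rewrite divff ?ee.
exists (g ord0 ord0); split; first exact: nzg.
apply/matrixP => a b; rewrite mxE; case: (eqVneq a b) => [->|ab]; first by rewrite gc mulr1n.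
by rewrite mulr0n (is_diag_mxP dg) // ; apply/negP => /eqP h; move: ab; rewrite (val_inj h) eqxx.
Qed.

Theorem mainTheorem7 (Rr : realType) (n k : nat) (r0 : Rr[i])
    (A : 'I_k.+1 -> 'M[Rr[i]]_n) (AR : 'M[Rr[i]]_n) :
  (1 <= k)%N -> r0 != 0 ->
  is_diag_mx (A ord0) ->
  (forall i j : 'I_n, i != j -> A ord0 i i != A ord0 j j) ->
  indecomposable ((A, AR) : system Rr[i] n k) ->
  exists (ij : 'I_n.-1 -> 'I_n * 'I_n) (m : 'I_n.-1 -> nat),
    [/\ injective ij,
        (forall l, (ij l).1 != (ij l).2),
        (forall l, (1 <= m l <= k.+1)%N),
        (* existence of a diagonal conjugation to a normalized system *)
        (exists D : 'M[Rr[i]]_n, invertible_diagonal D /\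
           forall l, (Bpoly r0 (gauge D (A, AR)) (ij l).1 (ij l).2)`_(m l) = 1) &
        ((* uniqueness of the normalized system *)
        (forall D1 D2 : 'M[Rr[i]]_n,
           invertible_diagonal D1 -> invertible_diagonal D2 ->
           (forall l, (Bpoly r0 (gauge D1 (A, AR)) (ij l).1 (ij l).2)`_(m l) = 1) ->
           (forall l, (Bpoly r0 (gauge D2 (A, AR)) (ij l).1 (ij l).2)`_(m l) = 1) ->
           gauge D1 (A, AR) = gauge D2 (A, AR)) /\
        (* automorphisms of the normalized system are exactly the c I_n, c <> 0 *)
        (forall D : 'M[Rr[i]]_n, invertible_diagonal D ->
           (forall l, (Bpoly r0 (gauge D (A, AR)) (ij l).1 (ij l).2)`_(m l) = 1) ->
           forall g : 'M[Rr[i]]_n,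
             automorphism (gauge D (A, AR)) g <-> exists c : Rr[i], c != 0 /\ g = c%:M))].
Proof.
move=> _ r0nz dA0 dist ind.
case: n A AR dA0 dist ind => [|n] A AR dA0 dist ind; last first.
  exact: main_succ.
exists (fun l => (l, l)), (fun _ => 1%N); split.
- by move=> [].
- by move=> [].
- by move=> [].
- exists 1%:M; split; first exact: scalar_invdiag (oner_neq0 _).
  by move=> [].
split.
  move=> D1 D2 i1 i2 _ _; apply: gauge_eq => // a; by case: a.
move=> D iD _ g; split; last by move=> [c [cnz ->]]; apply: scalar_auto.
move=> _; exists 1; split; first exact: oner_neq0.
by apply/matrixP => [[]].
Qed.
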